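(* Let $\Phi$ be a Young function, $\varphi\in\mathcal{G}^{\rm dec}_1$, and let $\psi:\mathbb{R}^n\to\mathbb{R}^n$ be measurable. Then $C_\psi$ is bounded on the weak Orlicz–Morrey space $\mathrm{w}\mathcal{M}_\Phi^\varphi(\mathbb{R}^n)$ if and only if there exists a constant $K>0$ such that for all measurable sets $A\subset\mathbb{R}^n$, \[ \|\chi_{\psi^{-1}(A)}\|_{\mathcal{M}_\Phi^\varphi}\le K\|\chi_A\|_{\mathcal{M}_\Phi^\varphi}. \]
   Context: A Young function is a convex $\Phi:[0,\infty)\to[0,\infty)$ with $\Phi(0)=0$, $\lim_{t\to\infty}\Phi(t)=\infty$. $\mathcal{G}^{\rm dec}_1$ is the set of $\varphi:(0,\infty)\to(0,\infty)$ that are almost decreasing (there is $C>0$ with $C\varphi(r)\ge\varphi(s)$ for $r<s$) and submultiplicative (there is $C>0$ with $\varphi(rs)\le C\varphi(r)\varphi(s)$). For a ball $B=B(a,r)$: $\|f\|_{\Phi,B}=\inf\{\lambda>0:\frac1{|B|}\int_B\Phi(|f|/\lambda)\le1\}$ and $\|f\|_{\mathcal{M}_\Phi^\varphi}=\sup_{a,r}\frac1{\varphi(r)}\|f\|_{\Phi,B(a,r)}$. For measurable $A$, $f$ and $t>0$, $m(A,f,t)=|\{x\in A:|f(x)|>t\}|$. Define $\|f\|_{\Phi,B,\mathrm{weak}}=\inf\{\lambda>0:\sup_{t>0}\frac1{|B|}\Phi(t)\,m(B,f/\lambda,t)\le1\}$ and $\mathrm{w}\mathcal{M}_\Phi^\varphi(\mathbb{R}^n)$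 as the set of measurable $f$ with $\|f\|_{\mathrm{w}\mathcal{M}_\Phi^\varphi}=\sup_{a\in\mathbb{R}^n,r>0}\frac1{\varphi(r)}\|f\|_{\Phi,B(a,r),\mathrm{weak}}<\infty$. $\chi_A$ is the characteristic function of $A$ and $C_\psi f=f\circ\psi$. *)

(* Defs.v *)
(* R^n is modelled as 'rV[R]_n. *)
From HB Require Import structures.
From mathcomp Require Import all_boot all_order all_algebra.
From mathcomp Require Import all_classical all_reals all_analysis.
Set Implicit Arguments. Unset Strict Implicit. Unset Printing Implicit Defensive.
Import Order.TTheory GRing.Theory Num.Theory.
Local Open Scope classical_set_scope.
Local Open Scope ring_scope.

(* Lebesgue measure on R^n, built as the Caratheodory restriction of   *)
(* the Lebesgue outer measure                                          *)
(*   lambda^*(X) = inf { sum_k vol(Q_k) | X \subset \bigcup_k Q_k }    *)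
(* where the Q_k are half-open boxes [a,b) = prod_i [a_i, b_i).        *)
(* Technically: on a copy of 'rV[R]_n with the discrete sigma-algebra, *)
(* the set function [box_content] is vol(Q) on boxes Q, 0 on set0 and  *)
(* +oo on non-box sets; its library extension [mu_ext] (inf over      *)
(* countable covers) is exactly the Lebesgue outer measure.            *)

Definition Rdisc (R : realType) (n : nat) : Type := 'rV[R]_n.
HB.instance Definition _ R n := Choice.on (Rdisc R n).
HB.instance Definition _ R n := isPointed.Build (Rdisc R n) (0 : 'rV[R]_n).
HB.instance Definition _ R n := @isMeasurable.Build default_measure_display
  (Rdisc R n) discrete_measurable discrete_measurable0
  (@discrete_measurableC _) (@discrete_measurableU _).

Definition boxset (R : realType) (n : nat) (a b : 'rV[R]_n) : set (Rdisc R n) :=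
  [set x : 'rV[R]_n | forall i : 'I_n, a ord0 i <= x ord0 i < b ord0 i].

Definition boxvol (R : realType) (n : nat) (a b : 'rV[R]_n) : R :=
  \prod_(i < n) Num.max 0 (b ord0 i - a ord0 i).

Definition box_content (R : realType) (n : nat) (A : set (Rdisc R n)) : \bar R :=
  if `[< A = set0 >] then 0%E
  else ereal_inf [set v | exists a b : 'rV[R]_n, A = boxset a b /\ v = (boxvol a b)%:E].

Lemma box_content0 (R : realType) (n : nat) : box_content (set0 : set (Rdisc R n)) = 0%E.
Proof. by rewrite /box_content asboolT. Qed.

Lemma box_content_ge0 (R : realType) (n : nat) (A : set (Rdisc R n)) :
  (0 <= box_content A)%E.
Proof.
rewrite /box_content; case: asboolP => _ //.
apply: le_ereal_inf_tmp => _ [a [b [_ ->]]]; rewrite lee_fin /boxvol.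
by apply: prodr_ge0 => i _; rewrite le_max lexx.
Qed.

Definition lebesgue_outer (R : realType) (n : nat) : set (Rdisc R n) -> \bar R :=
  mu_ext (@box_content R n).

HB.instance Definition _ (R : realType) (n : nat) :=
  isOuterMeasure.Build R (Rdisc R n) (@lebesgue_outer R n)
    (mu_ext0 (@box_content0 R n) (@box_content_ge0 R n))
    (mu_ext_ge0 (@box_content_ge0 R n))
    (le_mu_ext (@box_content R n))
    (mu_ext_sigma_subadditive (@box_content_ge0 R n)).

Definition LRn (R : realType) (n : nat) := caratheodory_type (@lebesgue_outer R n).

Definition leb (R : realType) (n : nat) : set (LRn R n) -> \bar R :=
  (@lebesgue_outer R n : set (caratheodory_type (@lebesgue_outer R n)) -> \bar R).

Definition ball_n (R : realType) (n : nat) (a : 'rV[R]_n) (r : R) : set (LRn R n) :=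
  [set y : 'rV[R]_n | \sum_(i < n) (y ord0 i - a ord0 i) ^+ 2 < r ^+ 2].

(* Phi : [0,oo) -> [0,oo) (values on negative reals are irrelevant) *)
Definition young_function (R : realType) (Phi : R -> R) : Prop :=
  [/\ (forall t, 0 <= t -> 0 <= Phi t),
      (forall x y s, 0 <= x -> 0 <= y -> 0 <= s <= 1 ->
         Phi (s * x + (1 - s) * y) <= s * Phi x + (1 - s) * Phi y),
      Phi 0 = 0 &
      Phi t @[t --> +oo] --> +oo].

(* phi : (0,oo) -> (0,oo) (values on non-positive reals are irrelevant) *)
Definition G_dec_1 (R : realType) (phi : R -> R) : Prop :=
  [/\ (forall r, 0 < r -> 0 < phi r),
      (exists C, 0 < C /\ forall r s, 0 < r -> r < s -> phi s <= C * phi r) &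
      (exists C, 0 < C /\ forall r s, 0 < r -> 0 < s ->
                      phi (r * s) <= C * phi r * phi s)].

Local Open Scope ereal_scope.

Definition orlicz_ball_norm (R : realType) (n : nat) (Phi : R -> R)
    (f : LRn R n -> R) (B : set (LRn R n)) : \bar R :=
  ereal_inf [set l%:E | l in [set l : R | (0 < l)%R /\
    ((fine (leb B))^-1)%:E * \int[leb (R:=R) (n:=n)]_(x in B) (Phi (Num.norm (f x) / l)%R)%:E
      <= 1]].

Definition morrey_norm (R : realType) (n : nat) (Phi phi : R -> R)
    (f : LRn R n -> R) : \bar R :=
  ereal_sup [set ((phi r)^-1)%:E * orlicz_ball_norm Phi f (ball_n a r)
             | a in [set: 'rV[R]_n] & r in [set r : R | (0 < r)%R]].

Definition distrib (R : realType) (n : nat) (A : set (LRn R n))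
    (f : LRn R n -> R) (t : R) : \bar R :=
  leb (A `&` [set x | (t < Num.norm (f x))%R]).

Definition weak_orlicz_ball_norm (R : realType) (n : nat) (Phi : R -> R)
    (f : LRn R n -> R) (B : set (LRn R n)) : \bar R :=
  ereal_inf [set l%:E | l in [set l : R | (0 < l)%R /\
    ereal_sup [set ((fine (leb B))^-1 * Phi t)%:E * distrib B (fun x => (f x / l)%R) t
               | t in [set t : R | (0 < t)%R]] <= 1]].

Definition weak_morrey_norm (R : realType) (n : nat) (Phi phi : R -> R)
    (f : LRn R n -> R) : \bar R :=
  ereal_sup [set ((phi r)^-1)%:E * weak_orlicz_ball_norm Phi f (ball_n a r)
             | a in [set: 'rV[R]_n] & r in [set r : R | (0 < r)%R]].

Definition weak_morrey_space (R : realType) (n : nat) (Phi phi : R -> R) :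
    set (LRn R n -> R) :=
  [set f | measurable_fun [set: LRn R n] f /\ weak_morrey_norm Phi phi f < +oo].

Definition composition_bounded (R : realType) (n : nat) (Phi phi : R -> R)
    (psi : LRn R n -> LRn R n) : Prop :=
  exists C : R, (0 < C)%R /\
    forall f, weak_morrey_space Phi phi f ->
      weak_morrey_space Phi phi (f \o psi) /\
      weak_morrey_norm Phi phi (f \o psi) <= C%:E * weak_morrey_norm Phi phi f.

(* Main.v *)
Require Import Defs.
From HB Require Import structures.
From mathcomp Require Import all_boot all_order all_algebra.
From mathcomp Require Import all_classical all_reals all_analysis.
From mathcomp Require Import lra measurable_realfun.
Import Order.TTheory GRing.Theory Num.Theory.
Local Open Scope classical_set_scope.
Local Open Scope ring_scope.

Section Meas.
Variables (R : realType) (n : nat).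

Definition hs (i : 'I_n) (c : R) : set (Rdisc R n) := [set x : 'rV[R]_n | x ord0 i < c].
Definition bup (i : 'I_n) (c : R) (b : 'rV[R]_n) : 'rV[R]_n :=
  \row_j (if j == i then Num.min (b ord0 i) c else b ord0 j).
Definition alow (i : 'I_n) (c : R) (a : 'rV[R]_n) : 'rV[R]_n :=
  \row_j (if j == i then Num.max (a ord0 i) c else a ord0 j).

Lemma boxvol_ge0 (a b : 'rV[R]_n) : 0 <= boxvol a b.
Proof. by rewrite /boxvol; apply: prodr_ge0 => i _; rewrite le_max lexx. Qed.

Lemma box_content_box (a b : 'rV[R]_n) : (box_content (boxset a b) <= (boxvol a b)%:E)%E.
Proof.
rewrite /box_content; case: asboolP => _; first by rewrite lee_fin boxvol_ge0.
by apply: ereal_inf_lbound; exists a, b.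
Qed.

Lemma split1 (a b c : R) :
  Num.max 0 (Num.min b c - a) + Num.max 0 (b - Num.max a c) = Num.max 0 (b - a).
Proof.
rewrite !maxEle !minEle.
repeat case: ifP; move=> *; lra.
Qed.

Lemma split_vol i c (a b : 'rV[R]_n) :
  boxvol a (bup i c b) + boxvol (alow i c a) b = boxvol a b.
Proof.
rewrite /boxvol (bigD1 i) //= [X in _ + X](bigD1 i) // [X in _ = X](bigD1 i) //=.
rewrite !mxE !eqxx.
have -> : \prod_(j < n | j != i) Num.max 0 (bup i c b ord0 j - a ord0 j) =
          \prod_(j < n | j != i) Num.max 0 (b ord0 j - a ord0 j).
  by apply: eq_bigr => j ji; rewrite !mxE (negbTE ji).
have -> : \prod_(j < n | j != i) Num.max 0 (b ord0 j - alow i c a ord0 j) =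
          \prod_(j < n | j != i) Num.max 0 (b ord0 j - a ord0 j).
  by apply: eq_bigr => j ji; rewrite !mxE (negbTE ji).
by rewrite -mulrDl split1.
Qed.

Lemma boxI_hs i c (a b : 'rV[R]_n) : boxset a b `&` hs i c = boxset a (bup i c b).
Proof.
apply/seteqP; split => x; rewrite /boxset /hs /=.
  move=> [Hb Hc] j; rewrite !mxE; case: ifP => [/eqP ->|_]; last exact: Hb.
  by have /andP[h1 h2] := Hb i; rewrite h1 /= lt_min h2 Hc.
move=> H; split.
  move=> j; have := H j; rewrite !mxE; case: ifP => [/eqP ->|_] //.
  by rewrite lt_min => /andP[-> /andP[]].
by have := H i; rewrite !mxE eqxx lt_min => /andP[_ /andP[]].
Qed.

Lemma boxIC_hs i c (a b : 'rV[R]_n) : boxset a b `&` ~` hs i c = boxset (alow i c a) b.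
Proof.
apply/seteqP; split => x; rewrite /boxset /hs /=.
  move=> [Hb Hc] j; rewrite !mxE; case: ifP => [/eqP ->|_]; last exact: Hb.
  have /andP[_ ->] := Hb i; rewrite ge_max andbT; apply/andP; split.
    by have /andP[] := Hb i.
  by rewrite leNgt; apply/negP.
move=> H; split.
  move=> j; have := H j; rewrite !mxE; case: ifP => [/eqP ->|_] //.
  by rewrite ge_max => /andP[/andP[-> _] ->].
by have := H i; rewrite !mxE eqxx ge_max => /andP[/andP[_ h] _]; apply/negP; rewrite -leNgt.
Qed.

Lemma bc_split i c (F : set (Rdisc R n)) :
  (box_content (F `&` hs i c) + box_content (F `&` ~` hs i c) <= box_content F)%E.
Proof.
rewrite [X in (_ <= X)%E]/box_content; case: asboolP => [->|F0].
  by rewrite !set0I box_content0 adde0.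
apply: le_ereal_inf_tmp => _ [a [b [-> ->]]].
rewrite boxI_hs boxIC_hs -(split_vol i c) EFinD.
by apply: leeD; apply: box_content_box.
Qed.

Lemma hs_cara i c : (@lebesgue_outer R n).-caratheodory (hs i c).
Proof.
apply: le_caratheodory_measurable => X.
change (lebesgue_outer (X `&` hs i c) + lebesgue_outer (X `&` ~` hs i c) <= mu_ext (@box_content R n) X)%E; rewrite /mu_ext.
apply: le_ereal_inf_tmp => _ [F [mF XF] <-].
apply: (@le_trans _ _ (\sum_(k <oo) box_content (F k `&` hs i c) +
                       \sum_(k <oo) box_content (F k `&` ~` hs i c))%E).
  apply: leeD; apply: ereal_inf_lbound.
    exists (fun k => F k `&` hs i c) => //; split => // x [/XF [k _ Fk] h].
    by exists k.
  exists (fun k => F k `&` ~` hs i c) => //; split => // x [/XF [k _ Fk] h].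
  by exists k.
rewrite -nneseriesD; last 2 first.
- by move=> *; apply: box_content_ge0.
- by move=> *; apply: box_content_ge0.
apply: lee_nneseries => [k _ _|k _]; last exact: bc_split.
by apply: adde_ge0; apply: box_content_ge0.
Qed.


Lemma coord_meas (i : 'I_n) :
  measurable_fun [set: LRn R n] (fun x : LRn R n => (x : 'rV[R]_n) ord0 i).
Proof.
apply: (measurability _ (measurable_realfun.RGenInftyO.measurableE R)) => //.
move=> _ [_ [c ->] <-]; rewrite setTI.
have -> : (fun x : LRn R n => (x : 'rV[R]_n) ord0 i) @^-1` `]-oo, c[%classic = hs i c.
  by apply/seteqP; split => x /=; rewrite /hs in_itv /=.
exact: hs_cara.
Qed.

Lemma ball_meas (a : 'rV[R]_n) (r : R) : measurable (ball_n a r).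
Proof.
have mg : measurable_fun [set: LRn R n]
   (fun y : LRn R n => \sum_(i < n) ((y : 'rV[R]_n) ord0 i - a ord0 i) ^+ 2).
  apply: measurable_sum => i; apply: measurable_funX.
  by apply: measurable_funB; [exact: coord_meas | exact: measurable_cst].
have := mg measurableT _ (measurable_itv `]-oo, r ^+ 2[).
rewrite setTI; congr measurable.
Qed.

End Meas.

Section Main.
Variables (R : realType) (n : nat) (Phi phi : R -> R).
Hypothesis hPhi : young_function Phi.
Hypothesis phipos : forall r : R, 0 < r -> 0 < phi r.

Local Notation LT := (LRn R n).
Definition lebO := (lebesgue_outer (R:=R) (n:=n) : OuterMeasure.type _ _).
Definition lebM : measure (LRn R n) R := (lebO : set (caratheodory_type lebO) -> \bar R).
Lemma leb_ge0 (A : set LT) : (0 <= leb A)%E.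
Proof. exact: (measure_ge0 lebM A). Qed.

Definition Es (f : LT -> R) (s : R) : set LT := [set x | s < `|f x|].
Definition cB (B : set LT) : R := (fine (leb B))^-1.
Definition condS (B E : set LT) (l : R) : Prop :=
  ((cB B)%:E * ((Phi l^-1)%:E * leb (E `&` B)) <= 1)%E.

Lemma Phi_ge0 x : 0 <= x -> 0 <= Phi x.
Proof. by case: hPhi => h _ _ _; apply: h. Qed.

Lemma Phi0 : Phi 0 = 0.
Proof. by case: hPhi. Qed.

Lemma Phi_mono x y : 0 <= x -> x <= y -> Phi x <= Phi y.
Proof.
case: hPhi => P0 Pc Pz _ x0 xy.
have [y0|y0] := eqVneq y 0.
  by rewrite y0 in xy *; have -> : x = 0 by apply/le_anti; rewrite xy x0.
have ypos : 0 < y by rewrite lt_neqAle eq_sym y0 (le_trans x0 xy).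
set s := x / y.
have s0 : 0 <= s by rewrite divr_ge0 // ltW.
have s1 : s <= 1 by rewrite ler_pdivrMr // mul1r.
have h01 : 0 <= s <= 1 by rewrite s0 s1.
have h := Pc y 0 s (ltW ypos) (lexx 0) h01.
rewrite Pz !mulr0 !addr0 /s divfK // in h.
apply: (le_trans h); rewrite -/s.
by apply: ler_piMl => //; apply: P0; apply: ltW.
Qed.


Local Open Scope ereal_scope.

Lemma Es_meas (f : LT -> R) s : measurable_fun [set: LT] f -> measurable (Es f s).
Proof.
move=> mf.
have := (measurableT_comp (@normr_measurable R setT) mf) measurableT _
  (measurable_itv `]s, +oo[).
by rewrite setTI; congr measurable; apply/seteqP; split => x /=; rewrite in_itv /= andbT.
Qed.

Lemma int_chi (E B : set LT) (l : R) : measurable E -> measurable B -> (0 < l)%R ->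
  \int[leb (R:=R) (n:=n)]_(x in B) (Phi (`|(\1_E : LT -> R) x| / l))%:E =
  (Phi l^-1)%:E * leb (E `&` B).
Proof.
move=> mE mB l0.
transitivity (\int[lebM]_(x in B) ((Phi l^-1)%:E * (\1_E x)%:E)).
  apply: (@eq_integral _ _ _ lebM) => x _; rewrite /indic.
  case: (x \in E) => /=.
    by rewrite normr1 mul1r mule1.
  by rewrite normr0 mul0r Phi0 mule0.
rewrite ge0_integralZl_EFin //.
- by rewrite integral_indic.
- by apply/measurable_EFinP; apply: measurable_indic.
- by apply: Phi_ge0; rewrite invr_ge0 ltW.
Qed.

Lemma orlicz_chi (E B : set LT) : measurable E -> measurable B ->
  orlicz_ball_norm Phi (\1_E : LT -> R) B =
  ereal_inf [set l%:E | l in [set l | (0 < l)%R /\ condS B E l]].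
Proof.
move=> mE mB; rewrite /orlicz_ball_norm; congr ereal_inf.
apply/seteqP; split => _ [l [l0 h] <-]; exists l => //; split => //.
  by rewrite /condS /cB -int_chi.
by rewrite int_chi.
Qed.

Lemma orlicz_ge0 (f : LT -> R) B : 0 <= orlicz_ball_norm Phi f B.
Proof. by apply: le_ereal_inf_tmp => _ [l [l0 _] <-]; rewrite lee_fin ltW. Qed.

Lemma weak_ge0 (f : LT -> R) B : 0 <= weak_orlicz_ball_norm Phi f B.
Proof. by apply: le_ereal_inf_tmp => _ [l [l0 _] <-]; rewrite lee_fin ltW. Qed.

Lemma cB_ge0 B : (0 <= cB B)%R.
Proof. by rewrite /cB invr_ge0 fine_ge0 // leb_ge0. Qed.

Lemma condS_mono B E l l' : (0 < l)%R -> (l <= l')%R -> condS B E l -> condS B E l'.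
Proof.
move=> l0 ll'; apply: le_trans; apply: lee_wpmul2l; first by rewrite lee_fin cB_ge0.
apply: lee_wpmul2r; first exact: leb_ge0.
rewrite lee_fin; apply: Phi_mono; first by rewrite invr_ge0 ltW // (lt_le_trans l0).
by rewrite lef_pV2 // ?posrE // (lt_le_trans l0).
Qed.

Lemma distribE B (f : LT -> R) (lam t : R) : (0 < lam)%R ->
  distrib B (fun x => f x / lam)%R t = leb (Es f (lam * t) `&` B).
Proof.
move=> lam0; rewrite /distrib setIC; congr leb; congr (_ `&` _).
apply/seteqP; split => x /=; rewrite normrM normfV (gtr0_norm lam0) ltr_pdivlMr //;
  by rewrite mulrC.
Qed.

Lemma wcondE B (f : LT -> R) (lam : R) : (0 < lam)%R ->
  (ereal_sup [set ((cB B * Phi t)%:E * distrib B (fun x => f x / lam)%R t)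
               | t in [set t : R | (0 < t)%R]] <= 1) <->
  (forall s, (0 < s)%R -> condS B (Es f s) (lam / s)).
Proof.
move=> lam0; split.
  move=> h s s0; apply: le_trans h; apply: ereal_sup_ubound.
  exists (s / lam)%R; first by rewrite /= divr_gt0.
  rewrite distribE // mulrCA divff ?gt_eqF // mulr1 invf_div EFinM muleA //.
move=> h; apply: ge_ereal_sup => _ [t t0 <-].
have := h (lam * t)%R (mulr_gt0 lam0 t0).
rewrite /condS -distribE // invf_div mulrC mulrA mulVf ?gt_eqF // mul1r.
by rewrite EFinM muleA.
Qed.

Lemma L1 B (f : LT -> R) s : measurable_fun [set: LT] f -> measurable B -> (0 < s)%R ->
  s%:E * orlicz_ball_norm Phi (\1_(Es f s) : LT -> R) B <= weak_orlicz_ball_norm Phi f B.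
Proof.
move=> mf mB s0; rewrite orlicz_chi //; last exact: Es_meas.
apply: le_ereal_inf_tmp => _ [lam [lam0 hw] <-].
rewrite -lee_pdivlMl // -EFinM; apply: ereal_inf_lbound.
exists (s^-1 * lam)%R => //; split; first by rewrite mulr_gt0 // invr_gt0.
by rewrite mulrC; exact: ((wcondE B f lam lam0).1 hw s s0).
Qed.

Lemma L2 B (f : LT -> R) (X : \bar R) : measurable_fun [set: LT] f -> measurable B ->
  (forall s, (0 < s)%R -> s%:E * orlicz_ball_norm Phi (\1_(Es f s) : LT -> R) B <= X) ->
  weak_orlicz_ball_norm Phi f B <= X.
Proof.
move=> mf mB h.
have X0 : 0 <= X by apply: le_trans (h 1%R ltr01); rewrite mul1e orlicz_ge0.
case: X X0 h => [x| |] X0 h; last 2 first.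
- exact: leey.
- by [].
apply/lee_addgt0Pr => e e0.
have x0 : (0 <= x)%R by rewrite -lee_fin.
set lam := (x + e)%R.
have lam0 : (0 < lam)%R by rewrite /lam; lra.
apply: ereal_inf_lbound; exists lam => //; split => //.
apply/(wcondE B f lam lam0) => s s0.
have hs := h s s0.
rewrite orlicz_chi // in hs; last exact: Es_meas.
have : ereal_inf [set l%:E | l in [set l | (0 < l)%R /\ condS B (Es f s) l]] < (lam / s)%:E.
  rewrite -lee_pdivlMl // in hs; apply: (le_lt_trans hs).
  by rewrite -EFinM lte_fin mulrC ltr_pM2r ?invr_gt0 // /lam; lra.
move=> /ereal_inf_lt [_ [l [l0 hl] <-]]; rewrite lte_fin => hlt.
exact: (condS_mono B (Es f s) l (lam / s)%R l0 (ltW hlt) hl).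
Qed.


Definition Mn (E : set LT) := morrey_norm Phi phi (\1_E : LT -> R).

Lemma M1 (f : LT -> R) s : measurable_fun [set: LT] f -> (0 < s)%R ->
  s%:E * Mn (Es f s) <= weak_morrey_norm Phi phi f.
Proof.
move=> mf s0; rewrite -lee_pdivlMl //.
apply: ge_ereal_sup => _ [a _ [r r0 <-]].
rewrite lee_pdivlMl // muleCA.
apply: (@le_trans _ _ (((phi r)^-1)%:E * weak_orlicz_ball_norm Phi f (ball_n a r))).
  apply: lee_wpmul2l; first by rewrite lee_fin invr_ge0 ltW // phipos.
  by apply: L1 => //; apply: ball_meas.
by apply: ereal_sup_ubound; exists a => //; exists r.
Qed.

Lemma M2 (f : LT -> R) X : measurable_fun [set: LT] f ->
  (forall s, (0 < s)%R -> s%:E * Mn (Es f s) <= X) -> weak_morrey_norm Phi phi f <= X.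
Proof.
move=> mf h; apply: ge_ereal_sup => _ [a _ [r r0 <-]].
have p0 := phipos r r0.
rewrite lee_pdivrMl //; apply: L2 => //; first exact: ball_meas.
move=> s s0; rewrite -lee_pdivrMl // muleCA.
apply: le_trans (h s s0).
apply: lee_wpmul2l; first by rewrite lee_fin ltW.
by apply: ereal_sup_ubound; exists a => //; exists r.
Qed.

Lemma Mn_ge0 E : 0 <= Mn E.
Proof.
apply: (@le_trans _ _ (((phi 1%R)^-1)%:E * orlicz_ball_norm Phi (\1_E : LT -> R) (ball_n (0%R : 'rV[R]_n) 1%R))).
  by apply: mule_ge0; [rewrite lee_fin invr_ge0 ltW // phipos | exact: orlicz_ge0].
by apply: ereal_sup_ubound; exists (0%R : 'rV[R]_n) => //; exists 1%R => //; exact: ltr01.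
Qed.

Lemma Es_chi_lt (E : set LT) s : (0 < s < 1)%R -> Es (\1_E : LT -> R) s = E.
Proof.
move=> /andP[s0 s1]; apply/seteqP; split => x; rewrite /Es /indic /=;
  (case: (pselect (E x)) => Ex; [rewrite mem_set //= normr1 | rewrite (memNset Ex) /= normr0]).
- by rewrite ltNge (ltW s0).
- by [].
- by move=> /Ex.
Qed.

Lemma Es_chi_ge (E : set LT) s : (1 <= s)%R -> Es (\1_E : LT -> R) s = set0.
Proof.
move=> s1; apply/seteqP; split => x //; rewrite /Es /indic /=;
  case: (x \in E) => /=; rewrite ?normr1 ?normr0 => h.
  by have := lt_le_trans h s1; rewrite ltxx.
by have := lt_le_trans h (le_trans ler01 s1); rewrite ltxx.
Qed.

Lemma Mn_set0 : Mn set0 <= 0.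
Proof.
apply: ge_ereal_sup => _ [a _ [r r0 <-]].
have -> : orlicz_ball_norm Phi (\1_(set0 : set LT) : LT -> R) (ball_n a r) = 0.
  apply/le_anti/andP; split; last exact: orlicz_ge0.
  rewrite orlicz_chi //; last exact: ball_meas.
  apply/lee_addgt0Pr => e e0; rewrite add0e; apply: ereal_inf_lbound.
  exists e => //; split => //; rewrite /condS set0I.
  have -> : leb (set0 : set LT) = 0 := measure0 lebM.
  by rewrite !mule0 lee01.
by rewrite mule0.
Qed.

Lemma chi_weak_le (E : set LT) : measurable E ->
  weak_morrey_norm Phi phi (\1_E : LT -> R) <= Mn E.
Proof.
move=> mE; apply: M2; first exact: measurable_indic.
move=> s s0; have [s1|s1] := ltP s 1%R.
  rewrite Es_chi_lt ?s0 ?s1 //.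
  rewrite -[leRHS](mul1e (Mn E)); apply: lee_wpmul2r; first exact: Mn_ge0.
  by rewrite lee_fin ltW.
rewrite Es_chi_ge //.
apply: (@le_trans _ _ (s%:E * 0)); last by rewrite mule0; exact: Mn_ge0.
apply: lee_wpmul2l; [by rewrite lee_fin ltW | exact: Mn_set0].
Qed.

Lemma chi_le_weak (E : set LT) : measurable E ->
  Mn E <= weak_morrey_norm Phi phi (\1_E : LT -> R).
Proof.
move=> mE; apply/lee_mul01Pr; first exact: Mn_ge0.
move=> s /andP[s0 s1].
have mi : measurable_fun [set: LT] (\1_E : LT -> R) by apply: measurable_indic.
have := M1 (\1_E : LT -> R) s mi s0.
by rewrite Es_chi_lt ?s0 ?s1.
Qed.

Lemma dir1 (psi : LT -> LT) : measurable_fun [set: LT] psi ->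
  composition_bounded Phi phi psi ->
   exists K : R, (0 < K)%R /\
     forall A : set LT, measurable A ->
       (morrey_norm Phi phi (\1_(psi @^-1` A) : LT -> R)
          <= K%:E * morrey_norm Phi phi (\1_A : LT -> R))%E.
Proof.
move=> mpsi [C [C0 hC]]; exists C; split => // A mA.
have mA' : measurable (psi @^-1` A) by have := mpsi measurableT A mA; rewrite setTI.
have [MA|MA] := eqVneq (Mn A) +oo.
  rewrite /Mn in MA. rewrite MA. rewrite gt0_muley ?lte_fin ?leey //.
have Mfin : Mn A < +oo by rewrite lt_neqAle MA leey.
have sp : weak_morrey_space Phi phi (\1_A : LT -> R).
  split; first exact: measurable_indic.
  exact: le_lt_trans (chi_weak_le A mA) Mfin.
have [_ hb] := hC _ sp.
apply: le_trans (chi_le_weak _ mA') _.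
have -> : (\1_(psi @^-1` A) : LT -> R) = (\1_A : LT -> R) \o psi.
  apply/funext => x; rewrite /= /indic.
  by case: (pselect (A (psi x))) => h; [rewrite !mem_set | rewrite !memNset].
apply: (le_trans hb).
apply: lee_wpmul2l. by rewrite lee_fin ltW.
exact: (chi_weak_le A mA).
Qed.

Lemma dir2 (psi : LT -> LT) : measurable_fun [set: LT] psi ->
   (exists K : R, (0 < K)%R /\
     forall A : set LT, measurable A ->
       (morrey_norm Phi phi (\1_(psi @^-1` A) : LT -> R)
          <= K%:E * morrey_norm Phi phi (\1_A : LT -> R))%E) ->
  composition_bounded Phi phi psi.
Proof.
move=> mpsi [K [K0 hK]]; exists K; split; first exact: K0.
move=> f [mf fin].
have mfp : measurable_fun [set: LT] (f \o psi).
  move=> _ Y mY; rewrite setTI.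
  have h := mf measurableT Y mY; rewrite setTI in h.
  by have := mpsi measurableT _ h; rewrite setTI.
have key : weak_morrey_norm Phi phi (f \o psi) <= K%:E * weak_morrey_norm Phi phi f.
  apply: M2; first exact: mfp.
  move=> s s0.
  have mEs := Es_meas f s mf.
  change (Es (f \o psi) s) with (psi @^-1` Es f s).
  apply: (le_trans (lee_wpmul2l _ (hK _ mEs))); first by rewrite lee_fin ltW.
  rewrite muleCA; apply: lee_wpmul2l; first by rewrite lee_fin ltW.
  exact: M1.
split; first split.
- exact: mfp.
- apply: le_lt_trans key _; move: fin.
  case: (weak_morrey_norm Phi phi f) => [w _| // | _].
    by rewrite -EFinM ltry.
  by rewrite gt0_muleNy ?lte_fin.
- exact: key.
Qed.
End Main.


Theorem theorem1p12 (R : realType) (n : nat) (Phi phi : R -> R)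
    (psi : LRn R n -> LRn R n) :
  young_function Phi -> G_dec_1 phi -> measurable_fun [set: LRn R n] psi ->
  (composition_bounded Phi phi psi <->
   exists K : R, 0 < K /\
     forall A : set (LRn R n), measurable A ->
       (morrey_norm Phi phi (\1_(psi @^-1` A) : LRn R n -> R)
          <= K%:E * morrey_norm Phi phi (\1_A : LRn R n -> R))%E).
Proof.
move=> hPhi hphi mpsi.
have phipos : forall r : R, 0 < r -> 0 < phi r by case: hphi.
split.
- exact: (@dir1 R n Phi phi hPhi phipos psi mpsi).
- exact: (@dir2 R n Phi phi hPhi phipos psi mpsi).
Qed.
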